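(* For every $m\ge3$ there exists $r_0(m)$ such that for all $r\ge r_0(m)$ there is no $r$-perfect code in $(\mathbb Z^m,d_a)$.
   Context: $d_a(\mathbf x,\mathbf y)=\max\{\sum_{i:x_i>y_i}(x_i-y_i),\sum_{i:x_i<y_i}(y_i-x_i)\}$ on $\mathbb Z^m$. A code $\mathcal C\subseteq\mathbb Z^m$ is $r$-perfect if the balls $\{\mathbf y: d_a(\mathbf y,\mathbf x)\le r\}$, $\mathbf x\in\mathcal C$, are pairwise disjoint and their union is $\mathbb Z^m$. *)

(* Defs.v *)
From mathcomp Require Import all_boot all_order all_algebra.
Set Implicit Arguments. Unset Strict Implicit. Unset Printing Implicit Defensive.
Import Order.TTheory GRing.Theory Num.Theory.
Local Open Scope ring_scope.

Definition point (m : nat) := 'I_m -> int.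

Definition d_a (m : nat) (x y : point m) : int :=
  Num.max (\sum_(i < m | y i < x i) (x i - y i))
          (\sum_(i < m | x i < y i) (y i - x i)).

Definition ball (m : nat) (r : int) (x : point m) (y : point m) : Prop :=
  d_a y x <= r.

Definition perfect_code (m : nat) (r : int) (C : point m -> Prop) : Prop :=
  (forall c1 c2 : point m, C c1 -> C c2 -> c1 <> c2 ->
     forall y : point m, ~ (ball r c1 y /\ ball r c2 y)) /\
  (forall y : point m, exists c : point m, C c /\ ball r c y).

(* Main.v *)
Require Import Defs.
From mathcomp Require Import all_boot all_order all_algebra zify.
From Stdlib Require Import Classical ClassicalEpsilon.
Import Order.TTheory GRing.Theory Num.Theory.
Set Implicit Arguments. Unset Strict Implicit.

(* Fix a codeword c.  For t = (a,b,cc) in N^3 with a+b+cc = r+1,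
   consider the point Y(t) = c + (a,b,cc,-1,...,-1).  The codeword x covering Y(t)
   satisfies x_i - c_i <= -1 on the tail coordinates and u(t) := (x-c)^+ restricted
   to the first three coordinates has total 2r+1 and dominates t; moreover x covers
   every Y(t') with t' <= u(t).  Hence the triangle {t : |t| = r+1} is partitioned
   into "down-sets" {t : t <= u}, |u| = 2(r+1)-1, which is impossible for r+1 >= 3
   (purely combinatorial lemma [comb]). *)

Definition T3 := (nat * nat * nat)%type.
Definition tsum (t : T3) : nat := let: (a, b, c) := t in (a + b + c)%N.
Definition tle (t s : T3) : Prop :=
  let: (a, b, c) := t in let: (a', b', c') := s in
  (a <= a')%N /\ (b <= b')%N /\ (c <= c')%N.

Definition Hyps (n : nat) (f : T3 -> T3) : Prop :=
  (forall t, tsum t = n -> tle t (f t)) /\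
  (forall t, tsum t = n -> tsum (f t) = (2 * n - 1)%N) /\
  (forall t t', tsum t = n -> tsum t' = n -> tle t (f t') -> f t = f t').

Lemma conj_hyps n f (s u : T3 -> T3) :
  (forall x, u (s x) = x) -> (forall x, s (u x) = x) ->
  (forall x, tsum (s x) = tsum x) -> (forall x y, tle (s x) (s y) <-> tle x y) ->
  Hyps n f -> Hyps n (fun x => s (f (u x))).
Proof.
move=> us su ss sle [H1 [H2 H3]].
have us' : forall x, tsum (u x) = tsum x by move=> x; rewrite -{2}(su x) ss.
split; [|split].
- move=> t ht; rewrite -{1}(su t) sle; apply: H1; by rewrite us'.
- move=> t ht; rewrite ss; apply: H2; by rewrite us'.
- move=> t t' ht ht'; rewrite -{1}(su t) sle => h.
  by rewrite (H3 (u t) (u t')) ?us'.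
Qed.

Lemma corner1 n f y a b c : Hyps n f -> f y = (a, b, c) -> tsum y = n -> (n <= a)%N ->
  f (n, 0, 0)%N = (a, b, c).
Proof.
move=> [H1 [H2 H3]] e hy ha; rewrite -e; apply: H3 => //=.
  by rewrite /= !addn0.
by rewrite e /=; lia.
Qed.
Lemma corner2 n f y a b c : Hyps n f -> f y = (a, b, c) -> tsum y = n -> (n <= b)%N ->
  f (0, n, 0)%N = (a, b, c).
Proof.
move=> [H1 [H2 H3]] e hy ha; rewrite -e; apply: H3 => //=.
  by rewrite /= addn0.
by rewrite e /=; lia.
Qed.
Lemma corner3 n f y a b c : Hyps n f -> f y = (a, b, c) -> tsum y = n -> (n <= c)%N ->
  f (0, 0, n)%N = (a, b, c).
Proof.
move=> [H1 [H2 H3]] e hy ha; rewrite -e; apply: H3 => //=.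
by rewrite e /=; lia.
Qed.

Lemma fsum n f y a b c : Hyps n f -> f y = (a, b, c) -> tsum y = n -> (a + b + c = 2 * n - 1)%N.
Proof. by move=> [H1 [H2 H3]] e hy; have := H2 y hy; rewrite e. Qed.

Lemma fle n f a b c u v w : Hyps n f -> f (a, b, c) = (u, v, w) -> (a + b + c = n)%N ->
  [/\ (a <= u)%N, (b <= v)%N & (c <= w)%N].
Proof. by move=> [H1 [H2 H3]] e hy; have := H1 (a, b, c) hy; rewrite e /= => -[? [? ?]]. Qed.

Lemma fcov n f a b c y u v w : Hyps n f -> f y = (u, v, w) -> tsum y = n -> (a + b + c = n)%N ->
  (a <= u)%N -> (b <= v)%N -> (c <= w)%N -> f (a, b, c) = (u, v, w).
Proof. move=> [H1 [H2 H3]] e hy hs h1 h2 h3; rewrite -e; apply: H3 => //; by rewrite e. Qed.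

Lemma edgeL n f : (3 <= n)%N -> Hyps n f ->
  (exists y N1 N2 N3, tsum y = n /\ f y = (N1, N2, N3) /\ (N1 < n)%N /\ (N2 < n)%N /\ (N3 < n)%N) ->
  forall b1 b2 b3, f (0, n, 0)%N = (b1, b2, b3) -> b3 = 0%N.
Proof.
move=> hn H [y [N1 [N2 [N3 [hy [ey [h1 [h2 h3]]]]]]]] b1 b2 b3 eB.
have sN := fsum H ey hy.
have fp : f (n - N2, N2, 0)%N = (N1, N2, N3) by apply: (fcov H ey hy); lia.
case ev: (f (n - N2 - 1, N2 + 1, 0)%N) => [[v1 v2] v3].
have [l1 l2 l3] := fle H ev (ltac:(lia)).
have sv := fsum H ev (ltac:(rewrite /=; lia)).
have fq : f (n - N2 - 1, N2, 1)%N = (N1, N2, N3) by apply: (fcov H ey hy); lia.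
case: (leqP 1 v3) => hv3.
  have : f (n - N2 - 1, N2, 1)%N = (v1, v2, v3).
    by apply: (fcov H ev (ltac:(rewrite /=; lia))); lia.
  rewrite fq => -[_ e _]; lia.
case: (leqP n v1) => hv1.
  have : f (n - N2, N2, 0)%N = (v1, v2, v3).
    by apply: (fcov H ev (ltac:(rewrite /=; lia))); lia.
  rewrite fp => -[e _ _]; lia.
have := corner2 H ev (ltac:(rewrite /=; lia)) (ltac:(lia)).
rewrite eB => -[_ _ ->]; lia.
Qed.

Lemma edgeE n f : (3 <= n)%N -> Hyps n f ->
  (forall y a b c, f y = (a, b, c) -> tsum y = n -> (n <= a)%N \/ (n <= b)%N \/ (n <= c)%N) ->
  forall a1 a2 a3 b1 b2 b3, f (n, 0, 0)%N = (a1, a2, a3) -> f (0, n, 0)%N = (b1, b2, b3) ->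
  (a2 + b1 = n - 1)%N.
Proof.
move=> hn H hc a1 a2 a3 b1 b2 b3 eA eB.
have [la1 la2 la3] := fle H eA (ltac:(lia)).
have [lb1 lb2 lb3] := fle H eB (ltac:(lia)).
have sA := fsum H eA (ltac:(rewrite /=; lia)).
have sB := fsum H eB (ltac:(rewrite /=; lia)).
case eu: (f (b1 + 1, n - b1 - 1, 0)%N) => [[u1 u2] u3].
have [l1 l2 l3] := fle H eu (ltac:(lia)).
have su := fsum H eu (ltac:(rewrite /=; lia)).
have hA : (n - b1 - 1 <= a2)%N.
  case: (hc _ _ _ _ eu (ltac:(rewrite /=; lia))) => [hu|[hu|hu]].
  - have := corner1 H eu (ltac:(rewrite /=; lia)) hu; rewrite eA => -[_ e _]; lia.
  - have := corner2 H eu (ltac:(rewrite /=; lia)) hu; rewrite eB => -[e _ _]; lia.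
  - lia.
case: (leqP (n - b1) a2) => h; last by lia.
have e1 : f (b1, n - b1, 0)%N = (b1, b2, b3).
  by apply: (fcov H eB (ltac:(rewrite /=; lia))); lia.
have : f (b1, n - b1, 0)%N = (a1, a2, a3).
  by apply: (fcov H eA (ltac:(rewrite /=; lia))); lia.
rewrite e1 => -[e _ _]; lia.
Qed.

Definition noncorner n (t : T3) : Prop := let: (a, b, c) := t in (a < n)%N /\ (b < n)%N /\ (c < n)%N.
Definition corner n (t : T3) : Prop := let: (a, b, c) := t in (n <= a)%N \/ (n <= b)%N \/ (n <= c)%N.

Definition isperm (s u : T3 -> T3) :=
  (forall x, u (s x) = x) /\ (forall x, s (u x) = x) /\ (forall x, tsum (s x) = tsum x) /\
      (forall x y, tle (s x) (s y) <-> tle x y) /\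
      (forall n t, noncorner n (s t) <-> noncorner n t) /\
      (forall n t, corner n (s t) <-> corner n t).

Definition p12 (t : T3) : T3 := let: (a, b, c) := t in (b, a, c).
Definition p13 (t : T3) : T3 := let: (a, b, c) := t in (c, b, a).
Definition p23 (t : T3) : T3 := let: (a, b, c) := t in (a, c, b).
Definition rot (t : T3) : T3 := let: (a, b, c) := t in (b, c, a).
Definition rot' (t : T3) : T3 := let: (a, b, c) := t in (c, a, b).

Ltac permtac := split; [|split; [|split; [|split; [|split]]]];
  [ by case=> [[? ?] ?] | by case=> [[? ?] ?]
  | case=> [[? ?] ?] /=; lia
  | move=> [[? ?] ?] [[? ?] ?] /=; split; intuition
  | move=> ? [[? ?] ?] /=; split; intuition
  | move=> ? [[? ?] ?] /=; split; intuition ].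

Lemma perm12 : isperm p12 p12. Proof. permtac. Qed.
Lemma perm13 : isperm p13 p13. Proof. permtac. Qed.
Lemma perm23 : isperm p23 p23. Proof. permtac. Qed.
Lemma permrot : isperm rot rot'. Proof. permtac. Qed.
Lemma permrot' : isperm rot' rot. Proof. permtac. Qed.

Lemma hyps_perm n f s u : isperm s u -> Hyps n f -> Hyps n (fun x => s (f (u x))).
Proof. by case=> h1 [h2 [h3 [h4 _]]]; apply: conj_hyps. Qed.

Lemma nc_perm n f s u : isperm s u ->
  (exists y, tsum y = n /\ noncorner n (f y)) ->
  (exists y, tsum y = n /\ noncorner n (s (f (u y)))).
Proof.
case=> h1 [h2 [h3 [h4 [h5 _]]]] [y [hy hn]]; exists (s y); by rewrite h3 h1 h5.
Qed.

Lemma c_perm n f s u : isperm s u ->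
  (forall y, tsum y = n -> corner n (f y)) ->
  (forall y, tsum y = n -> corner n (s (f (u y)))).
Proof.
case=> h1 [h2 [h3 [h4 [h5 h6]]]] hc y hy; rewrite h6; apply: hc; by rewrite -{1}(h2 y) h3 in hy.
Qed.

Lemma edgeL' n f : (3 <= n)%N -> Hyps n f ->
  (exists y, tsum y = n /\ noncorner n (f y)) ->
  forall b1 b2 b3, f (0, n, 0)%N = (b1, b2, b3) -> b3 = 0%N.
Proof.
move=> hn H [y [hy]]; case ey: (f y) => [[N1 N2] N3] [h1 [h2 h3]].
apply: edgeL => //; by exists y, N1, N2, N3.
Qed.

Lemma edgeE' n f : (3 <= n)%N -> Hyps n f ->
  (forall y, tsum y = n -> corner n (f y)) ->
  forall a1 a2 a3 b1 b2 b3, f (n, 0, 0)%N = (a1, a2, a3) -> f (0, n, 0)%N = (b1, b2, b3) ->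
  (a2 + b1 = n - 1)%N.
Proof.
move=> hn H hc; apply: edgeE => // y a b c e hy; by have := hc y hy; rewrite e.
Qed.

Lemma caseI n f : (3 <= n)%N -> Hyps n f -> (exists y, tsum y = n /\ noncorner n (f y)) -> False.
Proof.
move=> hn H hnc.
case eA: (f (n, 0, 0)%N) => [[a1 a2] a3].
case eB: (f (0, n, 0)%N) => [[b1 b2] b3].
case eC: (f (0, 0, n)%N) => [[c1 c2] c3].
have zb3 := edgeL' hn H hnc eB.
have za3 : a3 = 0%N.
  apply: (edgeL' hn (hyps_perm perm12 H) (nc_perm perm12 hnc) (b1 := a2) (b2 := a1)).
  by rewrite /= eA.
have za2 : a2 = 0%N.
  apply: (edgeL' hn (hyps_perm permrot' H) (nc_perm permrot' hnc) (b1 := a3) (b2 := a1)).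
  by rewrite /= eA.
have zb1 : b1 = 0%N.
  apply: (edgeL' hn (hyps_perm perm13 H) (nc_perm perm13 hnc) (b1 := b3) (b2 := b2)).
  by rewrite /= eB.
have zc1 : c1 = 0%N.
  apply: (edgeL' hn (hyps_perm permrot H) (nc_perm permrot hnc) (b1 := c2) (b2 := c3)).
  by rewrite /= eC.
have [la1 la2 la3] := fle H eA (ltac:(lia)).
have [lc1 lc2 lc3] := fle H eC (ltac:(lia)).
have sA := fsum H eA (ltac:(rewrite /=; lia)).
have sC := fsum H eC (ltac:(rewrite /=; lia)).
have P3 : forall a u1 u2 u3, (1 <= a)%N -> (a <= n - 1)%N -> f (a, n - a, 0)%N = (u1, u2, u3) -> (1 <= u3)%N.
  move=> a u1 u2 u3 h1 h2 eu.
  have [l1 l2 l3] := fle H eu (ltac:(lia)).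
  have su := fsum H eu (ltac:(rewrite /=; lia)).
  case: (leqP 1 u3) => // h3.
  case: (leqP n u1) => h4.
    have := corner1 H eu (ltac:(rewrite /=; lia)) h4; rewrite eA => -[_ e _]; lia.
  have := corner2 H eu (ltac:(rewrite /=; lia)) (ltac:(lia)); rewrite eB => -[e _ _]; lia.
have step : forall a, (1 <= a)%N -> (a + 1 <= n - 1)%N -> f (a, n - a, 0)%N = f (a + 1, n - (a + 1), 0)%N.
  move=> a h1 h2.
  case eU: (f (a, n - a, 0)%N) => [[u1 u2] u3].
  case eV: (f (a + 1, n - (a + 1), 0)%N) => [[v1 v2] v3].
  have hu3 := P3 a _ _ _ h1 (ltac:(lia)) eU.
  have hv3 := P3 (a + 1)%N _ _ _ (ltac:(lia)) h2 eV.
  have [l1 l2 l3] := fle H eU (ltac:(lia)).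
  have [k1 k2 k3] := fle H eV (ltac:(lia)).
  have e1 : f (a, n - 1 - a, 1)%N = (u1, u2, u3).
    by apply: (fcov H eU (ltac:(rewrite /=; lia))); lia.
  have e2 : f (a, n - 1 - a, 1)%N = (v1, v2, v3).
    by apply: (fcov H eV (ltac:(rewrite /=; lia))); lia.
  by rewrite -e1 -e2.
have ind : forall d, (d <= n - 2)%N -> f (1 + d, n - (1 + d), 0)%N = f (1, n - 1, 0)%N.
  elim=> [|d IH] hd; first by rewrite addn0.
  rewrite -IH; last by lia.
  have -> : (1 + d.+1 = (1 + d) + 1)%N by lia.
  rewrite (step (1 + d)%N) //; lia.
case eP: (f (1, n - 1, 0)%N) => [[q1 q2] q3].
have eP' : f (n - 1, 1, 0)%N = (q1, q2, q3).
  rewrite -eP -(ind (n - 2)%N (leqnn _)).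
  have x1 : (1 + (n - 2) = n - 1)%N by lia.
  have x2 : (n - (n - 1) = 1)%N by lia.
  by rewrite x1 x2.
have [l1 l2 l3] := fle H eP (ltac:(lia)).
have [k1 k2 k3] := fle H eP' (ltac:(lia)).
have sP := fsum H eP (ltac:(rewrite /=; lia)).
have hq3 := P3 _ _ _ _ (leqnn 1) (ltac:(lia)) eP.
case eV: (f (n - 2, 0, 2)%N) => [[v1 v2] v3].
have [m1 m2 m3] := fle H eV (ltac:(lia)).
have sV := fsum H eV (ltac:(rewrite /=; lia)).
case: (leqP 1 v2) => hv2.
  have e1 : f (n - 2, 1, 1)%N = (q1, q2, q3).
    by apply: (fcov H eP (ltac:(rewrite /=; lia))); lia.
  have e2 : f (n - 2, 1, 1)%N = (v1, v2, v3).
    by apply: (fcov H eV (ltac:(rewrite /=; lia))); lia.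
  rewrite e1 in e2; case: e2 => _ _ e; lia.
case: (leqP n v1) => h4.
  have := corner1 H eV (ltac:(rewrite /=; lia)) h4; rewrite eA => -[_ _ e]; lia.
have := corner3 H eV (ltac:(rewrite /=; lia)) (ltac:(lia)); rewrite eC => -[e _ _]; lia.
Qed.

Lemma caseII n f : (3 <= n)%N -> Hyps n f -> (forall y, tsum y = n -> corner n (f y)) -> False.
Proof.
move=> hn H hc.
case eA: (f (n, 0, 0)%N) => [[a1 a2] a3].
case eB: (f (0, n, 0)%N) => [[b1 b2] b3].
case eC: (f (0, 0, n)%N) => [[c1 c2] c3].
have e1 := edgeE' hn H hc eA eB.
have e2 : (b3 + c2 = n - 1)%N.
  apply: (edgeE' hn (hyps_perm permrot H) (c_perm permrot hc) (a1 := b2) (a3 := b1) (b2 := c3) (b3 := c1)).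
    by rewrite /= eB.
  by rewrite /= eC.
have e3 : (c1 + a3 = n - 1)%N.
  apply: (edgeE' hn (hyps_perm permrot' H) (c_perm permrot' hc) (a1 := c3) (a3 := c2) (b2 := a1) (b3 := a2)).
    by rewrite /= eC.
  by rewrite /= eA.
have [la1 la2 la3] := fle H eA (ltac:(lia)).
have [lb1 lb2 lb3] := fle H eB (ltac:(lia)).
have [lc1 lc2 lc3] := fle H eC (ltac:(lia)).
have sA := fsum H eA (ltac:(rewrite /=; lia)).
have sB := fsum H eB (ltac:(rewrite /=; lia)).
have sC := fsum H eC (ltac:(rewrite /=; lia)).
have cls : forall y u1 u2 u3, f y = (u1, u2, u3) -> tsum y = n ->
    (u1, u2, u3) = (a1, a2, a3) \/ (u1, u2, u3) = (b1, b2, b3) \/ (u1, u2, u3) = (c1, c2, c3).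
  move=> y u1 u2 u3 eu hy; have := hc y hy; rewrite eu /= => -[h|[h|h]].
  - by left; rewrite -eA (corner1 H eu hy h).
  - by right; left; rewrite -eB (corner2 H eu hy h).
  - by right; right; rewrite -eC (corner3 H eu hy h).
case: (leqP 1 a2) => h2; case: (leqP 1 a3) => h3.
- have x1 : f (a3, a2, 1)%N = (a1, a2, a3).
    by apply: (fcov H eA (ltac:(rewrite /=; lia))); lia.
  have x2 : f (a3, a2, 1)%N = (b1, b2, b3).
    by apply: (fcov H eB (ltac:(rewrite /=; lia))); lia.
  rewrite x1 in x2; case: x2 => e _ _; lia.
- case eu: (f (1, n - 2, 1)%N) => [[u1 u2] u3].
  have [k1 k2 k3] := fle H eu (ltac:(lia)).
  have := cls _ _ _ _ eu (ltac:(rewrite /=; lia)) => -[[_ _ e]|[[e _ _]|[_ e _]]]; lia.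
- case eu: (f (1, 1, n - 2)%N) => [[u1 u2] u3].
  have [k1 k2 k3] := fle H eu (ltac:(lia)).
  have := cls _ _ _ _ eu (ltac:(rewrite /=; lia)) => -[[_ e _]|[[_ _ e]|[e _ _]]]; lia.
- case eu: (f (1, 1, n - 2)%N) => [[u1 u2] u3].
  have [k1 k2 k3] := fle H eu (ltac:(lia)).
  have := cls _ _ _ _ eu (ltac:(rewrite /=; lia)) => -[[_ e _]|[[_ _ e]|[e _ _]]]; lia.
Qed.

Lemma comb n f : (3 <= n)%N -> Hyps n f -> False.
Proof.
move=> hn H.
case: (classic (exists y, tsum y = n /\ noncorner n (f y))) => h.
  exact: caseI hn H h.
apply: (caseII hn H) => y hy; case ey: (f y) => [[a b c]].
case: (leqP n a) => ha; first by left.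
case: (leqP n b) => hb; first by right; left.
case: (leqP n c) => hc'; first by right; right.
exfalso; apply: h; exists y; split=> //; rewrite ey /=; lia.
Qed.

Local Open Scope ring_scope.

Notation pos z := (Num.max z 0).
Notation neg z := (Num.max (- z) 0).
Definition PP m (v : 'I_m -> int) : int := \sum_i pos (v i).
Definition NN m (v : 'I_m -> int) : int := \sum_i neg (v i).

Lemma d_aE m (x y : point m) :
  d_a x y = Num.max (PP (fun i => x i - y i)) (NN (fun i => x i - y i)).
Proof.
rewrite /d_a /PP /NN; congr Num.max; rewrite big_mkcond; apply: eq_bigr => i _ /=;
  case: ifP => h; lia.
Qed.

Lemma ballE m (r : int) (x y : point m) :
  ball r x y <-> PP (fun i => y i - x i) <= r /\ NN (fun i => y i - x i) <= r.
Proof. rewrite /ball d_aE; lia. Qed.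

Definition upd m (v : 'I_m -> int) i w : 'I_m -> int := fun l => if l == i then w else v l.

Lemma sum_upd m (F : int -> int) (v p : 'I_m -> int) i w :
  \sum_l F (upd v i w l - p l) = \sum_l F (v l - p l) - F (v i - p i) + F (w - p i).
Proof.
rewrite (bigD1 i) //= [in RHS](bigD1 i) //= /upd eqxx.
rewrite (eq_bigr (fun l => F (v l - p l))); last by move=> l /negPf ->.
lia.
Qed.

Lemma PP_upd m (v p : 'I_m -> int) i w :
  PP (fun l => upd v i w l - p l) = PP (fun l => v l - p l) - pos (v i - p i) + pos (w - p i).
Proof. exact: (sum_upd (fun z => Num.max z 0)). Qed.
Lemma NN_upd m (v p : 'I_m -> int) i w :
  NN (fun l => upd v i w l - p l) = NN (fun l => v l - p l) - neg (v i - p i) + neg (w - p i).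
Proof. exact: (sum_upd (fun z => Num.max (- z) 0)). Qed.

Lemma upd_ne m (v : 'I_m -> int) i w j : j != i -> upd v i w j = v j.
Proof. by rewrite /upd => /negPf ->. Qed.

Definition i0 k : 'I_(k.+3) := @Ordinal (k.+3) 0 isT.
Definition i1 k : 'I_(k.+3) := @Ordinal (k.+3) 1 isT.
Definition i2 k : 'I_(k.+3) := @Ordinal (k.+3) 2 isT.
Definition tl k (j : 'I_k) : 'I_(k.+3) := @Ordinal (k.+3) (j.+3) (ltn_ord j).

Lemma sum3 k (F : 'I_(k.+3) -> int) :
  \sum_i F i = F (i0 k) + F (i1 k) + F (i2 k) + \sum_(j < k) F (tl j).
Proof.
rewrite 3!big_ord_recl !addrA.
congr (_ + _ + _ + _); try (congr F; by apply: val_inj).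
apply: eq_bigr => j _; congr F; by apply: val_inj.
Qed.

Definition Dv k (a b c : nat) : 'I_(k.+3) -> int := fun l =>
  if val l == 0%N then a%:Z else if val l == 1%N then b%:Z else if val l == 2%N then c%:Z else -1.

Arguments Dv : clear implicits.
Lemma Dv0 k a b c : Dv k a b c (i0 k) = a. Proof. by []. Qed.
Lemma Dv1 k a b c : Dv k a b c (i1 k) = b. Proof. by []. Qed.
Lemma Dv2 k a b c : Dv k a b c (i2 k) = c. Proof. by []. Qed.
Lemma Dvt k a b c j : Dv k a b c (tl j) = -1. Proof. by []. Qed.

Definition disj m (r : int) (C : point m -> Prop) :=
  forall c1 c2 : point m, C c1 -> C c2 -> c1 <> c2 ->
     forall y : point m, ~ (ball r c1 y /\ ball r c2 y).

Lemma PDv k a b c : PP (Dv k a b c) = (a + b + c)%:Z.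
Proof.
rewrite /PP sum3 Dv0 Dv1 Dv2 big1; last by move=> j _; rewrite Dvt.
lia.
Qed.

Lemma NDv k a b c : NN (Dv k a b c) = k%:Z.
Proof.
rewrite /NN sum3 Dv0 Dv1 Dv2.
rewrite (eq_bigr (fun _ => 1)); last by move=> j _; rewrite Dvt.
rewrite sumr_const card_ord; lia.
Qed.

Definition Yp k (c : point k.+3) a b cc : point k.+3 := fun l => c l + Dv k a b cc l.

Lemma coverA k (r : nat) C (c x : point k.+3) a b cc :
  disj r%:Z C -> C c -> C x -> (k <= r)%N -> (a + b + cc = r.+1)%N ->
  ball r%:Z x (Yp c a b cc) ->
  [/\ a%:Z <= pos (x (i0 k) - c (i0 k)), b%:Z <= pos (x (i1 k) - c (i1 k)),
      cc%:Z <= pos (x (i2 k) - c (i2 k)),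
      (forall j, x (tl j) - c (tl j) <= -1) &
      pos (x (i0 k) - c (i0 k)) + pos (x (i1 k) - c (i1 k)) + pos (x (i2 k) - c (i2 k))
        = (2 * r + 1)%:Z].
Proof.
move=> HD Cc Cx hk hs hb.
pose D := Dv k a b cc.
have eYc : forall l, Yp c a b cc l - c l = D l by move=> l; rewrite /Yp addrAC subrr add0r.
have PYc : PP (fun l => Yp c a b cc l - c l) = r.+1%:Z.
  rewrite /PP (eq_bigr (fun l => pos (D l))); last by move=> l _; rewrite eYc.
  by have := PDv k a b cc; rewrite /PP hs.
have NYc : NN (fun l => Yp c a b cc l - c l) = k%:Z.
  rewrite /NN (eq_bigr (fun l => neg (D l))); last by move=> l _; rewrite eYc.
  by have := NDv k a b cc; rewrite /NN.
have [hP hN] := (ballE _ _ _).1 hb.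
have hxc : x <> c.
  move=> e; move: hP; rewrite e PYc; lia.
have Hno : forall Q, ball r%:Z x Q -> ball r%:Z c Q -> False.
  by move=> Q h1 h2; apply: (HD x c Cx Cc hxc Q); split.
pose Y := Yp c a b cc.
have Qc : forall s, 0 < D s -> ball r%:Z c (upd Y s (Y s - 1)).
  move=> s hs0; apply/ballE.
  rewrite PP_upd NN_upd.
  rewrite /Y PYc NYc eYc.
  have -> : Yp c a b cc s - 1 - c s = D s - 1 by rewrite -eYc; lia.
  lia.
have A1 : forall s, 0 < D s -> Y s - x s <= 0.
  move=> s hs0; case: (lerP (Y s - x s) 0) => // hv; exfalso.
  apply: (Hno (upd Y s (Y s - 1))) (Qc s hs0).
  apply/ballE.
  rewrite PP_upd NN_upd /Y.
  rewrite /Y in hv; lia.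
have [s hs0] : exists s, 0 < D s.
  have : (0 < a)%N \/ (0 < b)%N \/ (0 < cc)%N by lia.
  case=> [h|[h|h]]; [exists (i0 k) | exists (i1 k) | exists (i2 k)]; rewrite /D ?Dv0 ?Dv1 ?Dv2; lia.
have A2 : NN (fun l => Yp c a b cc l - x l) = r%:Z.
  case: (ltrP (NN (fun l => Yp c a b cc l - x l)) r%:Z) => h; last by lia.
  exfalso; apply: (Hno (upd Y s (Y s - 1))) (Qc s hs0).
  apply/ballE.
  rewrite PP_upd NN_upd /Y.
  lia.
have A3 : forall j, x (tl j) - c (tl j) <= -1.
  move=> j; case: (lerP (x (tl j) - c (tl j)) (-1)) => // hj; exfalso.
  have hne : tl j != s.
    apply/eqP => e; move: hs0; rewrite -e /D Dvt; lia.
  have hDt : D (tl j) = -1 by rewrite /D Dvt.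
  have hVs := A1 s hs0.
  have eYt := eYc (tl j). have eYs := eYc s.
  apply: (Hno (upd (upd Y s (Y s - 1)) (tl j) (Y (tl j) + 1))).
    apply/ballE.
    rewrite PP_upd NN_upd.
    rewrite (upd_ne _ _ hne).
    rewrite PP_upd NN_upd /Y.
    rewrite /Y in hVs; lia.
  apply/ballE.
  rewrite PP_upd NN_upd.
  rewrite (upd_ne _ _ hne).
  rewrite PP_upd NN_upd /Y.
  rewrite PYc NYc; lia.
have h0 : 0 < a%:Z -> Y (i0 k) - x (i0 k) <= 0 by move=> h; apply: A1; rewrite /D Dv0.
have h1 : 0 < b%:Z -> Y (i1 k) - x (i1 k) <= 0 by move=> h; apply: A1; rewrite /D Dv1.
have h2 : 0 < cc%:Z -> Y (i2 k) - x (i2 k) <= 0 by move=> h; apply: A1; rewrite /D Dv2.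
rewrite /Y /Yp Dv0 Dv1 Dv2 in h0 h1 h2.
move: A2; rewrite /NN sum3 big1; last first.
  move=> j _; have := A3 j; rewrite /Yp Dvt; lia.
rewrite /Yp Dv0 Dv1 Dv2 => A2.
split => //; lia.
Qed.

Lemma coverB k (r : nat) (c x : point k.+3) a b cc a' b' cc' :
  (a + b + cc = r.+1)%N -> (a' + b' + cc' = r.+1)%N ->
  ball r%:Z x (Yp c a' b' cc') ->
  a'%:Z <= pos (x (i0 k) - c (i0 k)) -> b'%:Z <= pos (x (i1 k) - c (i1 k)) ->
  cc'%:Z <= pos (x (i2 k) - c (i2 k)) ->
  (forall j, x (tl j) - c (tl j) <= -1) ->
  pos (x (i0 k) - c (i0 k)) + pos (x (i1 k) - c (i1 k)) + pos (x (i2 k) - c (i2 k))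
        = (2 * r + 1)%:Z ->
  a%:Z <= pos (x (i0 k) - c (i0 k)) -> b%:Z <= pos (x (i1 k) - c (i1 k)) ->
  cc%:Z <= pos (x (i2 k) - c (i2 k)) ->
  ball r%:Z x (Yp c a b cc).
Proof.
move=> hs hs' hb ha' hb' hc' ht hsum ha hbb hc.
have [hP _] := (ballE _ _ _).1 hb.
apply/ballE; move: hP; rewrite /PP /NN !sum3.
have -> : forall a b cc, \sum_(j < k) pos (Yp c a b cc (tl j) - x (tl j)) =
    \sum_(j < k) pos (c (tl j) - 1 - x (tl j)).
  by move=> ? ? ?; apply: eq_bigr => j _; rewrite /Yp Dvt.
have -> : \sum_(j < k) neg (Yp c a b cc (tl j) - x (tl j)) = 0.
  by apply: big1 => j _; have := ht j; rewrite /Yp Dvt; lia.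
have [T ->] : exists T : int, \sum_(j < k) pos (c (tl j) - 1 - x (tl j)) = T by eexists.
rewrite /Yp !Dv0 !Dv1 !Dv2.
lia.
Qed.

Theorem mainTheorem11 :
  forall m : nat, (3 <= m)%N ->
  exists r0 : nat, forall r : nat, (r0 <= r)%N ->
    ~ exists C : point m -> Prop, perfect_code r%:Z C.
Proof.
move=> m hm; exists m => r hr [C [Hdisj Hcov]].
case: m hm hr C Hdisj Hcov => [|[|[|k]]] // hm hr C Hdisj Hcov.
have [c [Cc _]] := Hcov (fun _ => 0).
have Hx : forall t : T3, exists x, C x /\ ball r%:Z x (let: (a, b, cc) := t in Yp c a b cc).
  by move=> t; apply: Hcov.
pose X := fun t => proj1_sig (constructive_indefinite_description _ (Hx t)).
have HX : forall t, C (X t) /\ ball r%:Z (X t) (let: (a, b, cc) := t in Yp c a b cc).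
  by move=> t; rewrite /X; case: (constructive_indefinite_description _ _).
pose F := fun x : point k.+3 => (absz (pos (x (i0 k) - c (i0 k))), absz (pos (x (i1 k) - c (i1 k))),
                                  absz (pos (x (i2 k) - c (i2 k)))).
pose f := fun t => F (X t).
have hk : (k <= r)%N by lia.
have HA : forall a b cc, (a + b + cc = r.+1)%N -> _ :=
  fun a b cc hs => coverA Hdisj Cc (HX (a, b, cc)).1 hk hs (HX (a, b, cc)).2.
apply: (@comb r.+1 f); first by lia.
split; [|split].
- move=> [[a b] cc] /= hs; have [h0 h1 h2 h3 h4] := HA a b cc hs.
  rewrite /f /F /=; lia.
- move=> [[a b] cc] /= hs; have [h0 h1 h2 h3 h4] := HA a b cc hs.
  rewrite /f /F /=; lia.
- move=> [[a b] cc] [[a' b'] cc'] /= hs hs'.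
  have [h0 h1 h2 h3 h4] := HA a' b' cc' hs'.
  rewrite /f /F /= => -[l0 [l1 l2]].
  have hb : ball r%:Z (X (a', b', cc')) (Yp c a b cc).
    apply: (coverB hs hs' (HX (a', b', cc')).2) => //; lia.
  have e : X (a, b, cc) = X (a', b', cc').
    apply: Classical_Prop.NNPP => ne.
    apply: (Hdisj _ _ (HX (a, b, cc)).1 (HX (a', b', cc')).1 ne (Yp c a b cc)).
    by split => //; exact: (HX (a, b, cc)).2.
  by rewrite e.
Qed.
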